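(* Let $\mathcal{A}$ be a Banach algebra. Then the following are equivalent: (i) $\mathcal{A}$ is approximately amenable; (ii) $\mathcal{H}^n_{app}(\mathcal{A},X^* )=\{0\}$ for every Banach $\mathcal{A}$-bimodule $X$ and every $n\ge1$.
   Context: For a Banach $\mathcal{A}$-bimodule $X$, $X^*$ is a Banach $\mathcal{A}$-bimodule via $\langle x,a\cdot\varphi\rangle=\langle x\cdot a,\varphi\rangle$, $\langle x,\varphi\cdot a\rangle=\langle a\cdot x,\varphi\rangle$. For a Banach $\mathcal{A}$-bimodule $Z$, $\mathcal{BL}^n(\mathcal{A},Z)$ ($n\ge1$) is the space of bounded $n$-linear maps $\mathcal{A}^n\to Z$, $\mathcal{BL}^0(\mathcal{A},Z)=Z$, with Hochschild coboundary $(\delta^nT)(a_1,\dots,a_{n+1})=a_1\cdot T(a_2,\dots,a_{n+1})+\sum_{k=1}^n(-1)^kT(a_1,\dots,a_ka_{k+1},\dots,a_{n+1})+(-1)^{n+1}T(a_1,\dots,a_n)\cdot a_{n+1}$ and $\delta^0(z)(a)=a\cdot z-z\cdot a$. $\mathcal{Z}^n(\mathcal{A},Z)=\ker\delta^n$, $\mathcal{B}^n(\mathcal{A},Z)=\operatorname{ran}\delta^{n-1}$. Strong topology: $T_i\to T$ iff $\|(T_i-T)(a_1,\dots,a_n)\|\to0$ for all $a_j\in\mathcal{A}$. $\mathcal{H}^n_{app}(\mathcal{A},Z)=\mathcal{Z}^n(\mathcal{A},Z)/\overline{\mathcal{B}^n(\mathcal{A},Z)}^{\mathrm{strong}}$ for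 $n\ge1$. $\mathcal{A}$ is approximately amenable if for every Banach $\mathcal{A}$-bimodule $X$ and every continuous derivation $D:\mathcal{A}\to X^*$ (i.e. $D\in\mathcal{Z}^1(\mathcal{A},X^* )$) there is a net $(f_\nu)\subseteq X^*$ with $D(a)=\lim_\nu(a\cdot f_\nu-f_\nu\cdot a)$ in norm for every $a\in\mathcal{A}$. *)

(* Defs.v *)
From Stdlib Require Import Reals List Arith.
Import ListNotations.
Open Scope R_scope.

Record C := mkC { Re : R; Im : R }.
Definition C0 : C := mkC 0 0.
Definition C1 : C := mkC 1 0.
Definition Cadd (z w : C) : C := mkC (Re z + Re w) (Im z + Im w).
Definition Copp (z : C) : C := mkC (- Re z) (- Im z).
Definition Cmul (z w : C) : C :=
  mkC (Re z * Re w - Im z * Im w) (Re z * Im w + Im z * Re w).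
Definition Cnorm (z : C) : R := sqrt (Re z * Re z + Im z * Im z).

Record BanachSpace := {
  bs_car :> Type;
  vzero : bs_car;
  vadd : bs_car -> bs_car -> bs_car;
  vopp : bs_car -> bs_car;
  vscal : C -> bs_car -> bs_car;
  vnorm : bs_car -> R;
  vadd_assoc : forall x y z, vadd x (vadd y z) = vadd (vadd x y) z;
  vadd_comm : forall x y, vadd x y = vadd y x;
  vadd_0 : forall x, vadd vzero x = x;
  vadd_opp : forall x, vadd x (vopp x) = vzero;
  vscal_addl : forall c d x, vscal (Cadd c d) x = vadd (vscal c x) (vscal d x);
  vscal_addr : forall c x y, vscal c (vadd x y) = vadd (vscal c x) (vscal c y);
  vscal_mul : forall c d x, vscal (Cmul c d) x = vscal c (vscal d x);
  vscal_1 : forall x, vscal C1 x = x;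
  vnorm_eq0 : forall x, vnorm x = 0 -> x = vzero;
  vnorm_0 : vnorm vzero = 0;
  vnorm_triangle : forall x y, vnorm (vadd x y) <= vnorm x + vnorm y;
  vnorm_scal : forall c x, vnorm (vscal c x) = Cnorm c * vnorm x;
  vcomplete : forall u : nat -> bs_car,
    (forall eps, 0 < eps -> exists N, forall m n, (N <= m)%nat -> (N <= n)%nat ->
        vnorm (vadd (u m) (vopp (u n))) < eps) ->
    exists l, forall eps, 0 < eps -> exists N, forall n, (N <= n)%nat ->
        vnorm (vadd (u n) (vopp l)) < eps
}.
Arguments vzero {_}. Arguments vadd {_}. Arguments vopp {_}.
Arguments vscal {_}. Arguments vnorm {_}.

Record BanachAlgebra := {
  ba_sp :> BanachSpace;
  amul : ba_sp -> ba_sp -> ba_sp;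
  amul_assoc : forall a b c, amul a (amul b c) = amul (amul a b) c;
  amul_addl : forall a b c, amul (vadd a b) c = vadd (amul a c) (amul b c);
  amul_addr : forall a b c, amul a (vadd b c) = vadd (amul a b) (amul a c);
  amul_scall : forall z a b, amul (vscal z a) b = vscal z (amul a b);
  amul_scalr : forall z a b, amul a (vscal z b) = vscal z (amul a b);
  amul_norm : forall a b, vnorm (amul a b) <= vnorm a * vnorm b
}.
Arguments amul {_}.

Record BanachBimodule (A : BanachAlgebra) := {
  bm_sp :> BanachSpace;
  lact : A -> bm_sp -> bm_sp;
  ract : bm_sp -> A -> bm_sp;
  lact_addl : forall a b x, lact (vadd a b) x = vadd (lact a x) (lact b x);
  lact_addr : forall a x y, lact a (vadd x y) = vadd (lact a x) (lact a y);
  lact_scall : forall z a x, lact (vscal z a) x = vscal z (lact a x);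
  lact_scalr : forall z a x, lact a (vscal z x) = vscal z (lact a x);
  ract_addl : forall x y a, ract (vadd x y) a = vadd (ract x a) (ract y a);
  ract_addr : forall x a b, ract x (vadd a b) = vadd (ract x a) (ract x b);
  ract_scall : forall z x a, ract (vscal z x) a = vscal z (ract x a);
  ract_scalr : forall z x a, ract x (vscal z a) = vscal z (ract x a);
  lact_assoc : forall a b x, lact (amul a b) x = lact a (lact b x);
  ract_assoc : forall x a b, ract x (amul a b) = ract (ract x a) b;
  lract_assoc : forall a x b, ract (lact a x) b = lact a (ract x b);
  bm_bounded : exists K, forall a x,
    vnorm (lact a x) <= K * vnorm a * vnorm x /\ vnorm (ract x a) <= K * vnorm x * vnorm a
}.
Arguments lact {_ _}. Arguments ract {_ _}.

Definition Fn {A : BanachAlgebra} (X : BanachBimodule A) := X -> C.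

Definition is_bounded_linear_functional {A} {X : BanachBimodule A} (f : Fn X) : Prop :=
  (forall x y, f (vadd x y) = Cadd (f x) (f y)) /\
  (forall c x, f (vscal c x) = Cmul c (f x)) /\
  (exists K, forall x, Cnorm (f x) <= K * vnorm x).

Definition Fzero {A} {X : BanachBimodule A} : Fn X := fun _ => C0.
Definition Fadd {A} {X : BanachBimodule A} (f g : Fn X) : Fn X := fun x => Cadd (f x) (g x).
Definition Fopp {A} {X : BanachBimodule A} (f : Fn X) : Fn X := fun x => Copp (f x).
Definition Fsub {A} {X : BanachBimodule A} (f g : Fn X) : Fn X := Fadd f (Fopp g).
Definition dlact {A} {X : BanachBimodule A} (a : A) (f : Fn X) : Fn X := fun x => f (ract x a).
Definition dract {A} {X : BanachBimodule A} (f : Fn X) (a : A) : Fn X := fun x => f (lact a x).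

Definition opnorm_le {A} {X : BanachBimodule A} (f : Fn X) (eps : R) : Prop :=
  forall x, Cnorm (f x) <= eps * vnorm x.

Record DirectedSet := {
  ds_car :> Type;
  ds_le : ds_car -> ds_car -> Prop;
  ds_refl : forall i, ds_le i i;
  ds_trans : forall i j k, ds_le i j -> ds_le j k -> ds_le i k;
  ds_directed : forall i j, exists k, ds_le i k /\ ds_le j k;
  ds_inhabited : inhabited ds_car
}.
Arguments ds_le {_}.

(* ---------- n-linear maps A^n -> X^*, represented on lists of length n ---------- *)
Definition Cochain {A} (X : BanachBimodule A) := list A -> Fn X.

Definition set_nth {T} (i : nat) (l : list T) (v : T) : list T :=
  firstn i l ++ v :: skipn (S i) l.

Definition prod_norms {A : BanachAlgebra} (l : list A) : R :=
  fold_right (fun a r => vnorm a * r) 1 l.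

Definition is_BL {A} {X : BanachBimodule A} (n : nat) (T : Cochain X) : Prop :=
  (forall l, length l = n -> is_bounded_linear_functional (T l)) /\
  (forall l i (a b : A) c x, length l = n -> (i < n)%nat ->
     T (set_nth i l (vadd a (vscal c b))) x
     = Cadd (T (set_nth i l a) x) (Cmul c (T (set_nth i l b) x))) /\
  (exists K, forall l, length l = n -> opnorm_le (T l) (K * prod_norms l)).

(* merge the entries at 0-indexed positions k, k+1 *)
Fixpoint mergeAt {A : BanachAlgebra} (k : nat) (l : list A) : list A :=
  match k, l with
  | O, a :: b :: t => amul a b :: t
  | S k', a :: t => a :: mergeAt k' t
  | _, _ => l
  end.

Definition sgn {A} {X : BanachBimodule A} (k : nat) (f : Fn X) : Fn X :=
  if Nat.even k then f else Fopp f.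

Definition coboundary {A} {X : BanachBimodule A} (n : nat) (T : Cochain X) : Cochain X :=
  fun l => match l with
  | [] => Fzero
  | a1 :: rest =>
      Fadd (dlact a1 (T rest))
        (Fadd (fold_right (fun k acc => Fadd (sgn k (T (mergeAt (k - 1) l))) acc)
                 Fzero (seq 1 n))
              (sgn (S n) (dract (T (removelast l)) (last l a1))))
  end.

Definition is_cocycle {A} {X : BanachBimodule A} (n : nat) (T : Cochain X) : Prop :=
  is_BL n T /\ forall l, length l = S n -> forall x, coboundary n T l x = C0.

Definition is_coboundary {A} {X : BanachBimodule A} (n : nat) (U : Cochain X) : Prop :=
  exists S, is_BL (n - 1) S /\
    forall l, length l = n -> forall x, U l x = coboundary (n - 1) S l x.

Definition in_strong_closure_B {A} {X : BanachBimodule A} (n : nat) (T : Cochain X) : Prop :=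
  exists (I : DirectedSet) (U : I -> Cochain X),
    (forall i, is_coboundary n (U i)) /\
    forall l, length l = n -> forall eps, 0 < eps ->
      exists i0, forall i, ds_le i0 i -> opnorm_le (Fsub (U i l) (T l)) eps.

Definition Happ_trivial (A : BanachAlgebra) (X : BanachBimodule A) (n : nat) : Prop :=
  forall T : Cochain X, is_cocycle n T -> in_strong_closure_B n T.

(* approximate amenability; D in Z^1(A,X^* ) is represented by D a := T [a] *)
Definition approx_amenable (A : BanachAlgebra) : Prop :=
  forall (X : BanachBimodule A) (T : Cochain X), is_cocycle 1 T ->
    exists (I : DirectedSet) (f : I -> Fn X),
      (forall i, is_bounded_linear_functional (f i)) /\
      forall a : A, forall eps, 0 < eps ->
        exists i0, forall i, ds_le i0 i ->
          opnorm_le (Fsub (Fsub (dlact a (f i)) (dract (f i) a)) (T [a])) eps.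

(* Main.v *)
From Stdlib Require Import Reals List Arith Lra Lia Psatz.
From Stdlib Require Import ClassicalEpsilon ProofIrrelevance FunctionalExtensionality.
Require Import Defs.
Import ListNotations.
Open Scope R_scope.

Lemma Ceq : forall z w, Re z = Re w -> Im z = Im w -> z = w.
Proof. intros [a b] [c d]; simpl; intros; subst; reflexivity. Qed.

Lemma Cring : ring_theory C0 C1 Cadd Cmul (fun a b => Cadd a (Copp b)) Copp (@eq C).
Proof.
  constructor; intros; apply Ceq; simpl; ring.
Qed.
Add Ring Cring : Cring.

Lemma Cnorm_nonneg : forall z, 0 <= Cnorm z.
Proof. intros; apply sqrt_pos. Qed.

Lemma Cnorm_sq : forall z, Cnorm z * Cnorm z = Re z * Re z + Im z * Im z.
Proof. intros; unfold Cnorm; apply sqrt_sqrt; nra. Qed.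

Lemma Cnorm_C0 : Cnorm C0 = 0.
Proof. unfold Cnorm; simpl. replace (0*0+0*0) with 0 by ring. apply sqrt_0. Qed.

Lemma Cnorm_le_sq : forall z t, 0 <= t -> Re z * Re z + Im z * Im z <= t * t -> Cnorm z <= t.
Proof.
  intros z t Ht H. pose proof (Cnorm_sq z). pose proof (Cnorm_nonneg z). nra.
Qed.

Lemma Cnorm_mul : forall z w, Cnorm (Cmul z w) = Cnorm z * Cnorm w.
Proof.
  intros [a b] [c d]; unfold Cnorm; simpl.
  rewrite <- sqrt_mult by nra. f_equal. ring.
Qed.

Lemma Cnorm_opp : forall z, Cnorm (Copp z) = Cnorm z.
Proof. intros [a b]; unfold Cnorm; simpl; f_equal; ring. Qed.

Lemma Cnorm_add : forall z w, Cnorm (Cadd z w) <= Cnorm z + Cnorm w.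
Proof.
  intros z w. apply Cnorm_le_sq.
  - pose proof (Cnorm_nonneg z); pose proof (Cnorm_nonneg w); lra.
  - pose proof (Cnorm_sq z) as Hz; pose proof (Cnorm_sq w) as Hw.
    pose proof (Cnorm_nonneg z) as Pz; pose proof (Cnorm_nonneg w) as Pw.
    set (nz := Cnorm z) in *; set (nw := Cnorm w) in *.
    destruct z as [a b], w as [c d]; simpl in *.
    assert (Hp : 0 <= nz * nw) by (apply Rmult_le_pos; auto).
    assert (HC : a*c + b*d <= nz * nw).
    { destruct (Rle_dec (a*c+b*d) 0) as [Hn|Hn]. lra.
      assert ((a*c+b*d)*(a*c+b*d) <= (nz * nw)*(nz * nw)).
      { replace ((nz * nw)*(nz * nw)) with ((nz * nz) * (nw * nw)) by ring.
        rewrite Hz, Hw. pose proof (pow2_ge_0 (a*d-b*c)). nra. }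
      nra. }
    nra.
Qed.

Lemma Cnorm_sub : forall z w, Cnorm (Cadd z (Copp w)) <= Cnorm z + Cnorm w.
Proof. intros; rewrite <- (Cnorm_opp w); apply Cnorm_add. Qed.

Lemma Cnorm_sym : forall z w, Cnorm (Cadd z (Copp w)) = Cnorm (Cadd w (Copp z)).
Proof. intros. replace (Cadd z (Copp w)) with (Copp (Cadd w (Copp z))) by ring. apply Cnorm_opp. Qed.

Lemma Cnorm_eq0 : forall z, Cnorm z = 0 -> z = C0.
Proof.
  intros z H. pose proof (Cnorm_sq z). rewrite H in H0.
  apply Ceq; simpl; nra.
Qed.

Lemma Cnorm_Re : forall z, Rabs (Re z) <= Cnorm z.
Proof.
  intros z. pose proof (Cnorm_sq z); pose proof (Cnorm_nonneg z).
  apply Rabs_le; split; nra.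
Qed.
Lemma Cnorm_Im : forall z, Rabs (Im z) <= Cnorm z.
Proof.
  intros z. pose proof (Cnorm_sq z); pose proof (Cnorm_nonneg z).
  apply Rabs_le; split; nra.
Qed.
Lemma Cnorm_ReIm : forall z, Cnorm z <= Rabs (Re z) + Rabs (Im z).
Proof.
  intros z. apply Cnorm_le_sq. pose proof (Rabs_pos (Re z)); pose proof (Rabs_pos (Im z)); lra.
  pose proof (Rabs_pos (Re z)); pose proof (Rabs_pos (Im z)).
  assert (E1 : Rabs (Re z) * Rabs (Re z) = Re z * Re z) by (rewrite <- Rabs_mult; apply Rabs_pos_eq; nra).
  assert (E2 : Rabs (Im z) * Rabs (Im z) = Im z * Im z) by (rewrite <- Rabs_mult; apply Rabs_pos_eq; nra).
  nra.
Qed.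

Lemma Cnorm_m1 : Cnorm (mkC (-1) 0) = 1.
Proof. unfold Cnorm; simpl. replace (-1 * -1 + 0*0) with 1 by ring. apply sqrt_1. Qed.

Definition m1 : C := mkC (-1) 0.

Lemma vnorm_nonneg : forall (B : BanachSpace) (x : B), 0 <= vnorm x.
Proof.
  intros B x.
  assert (H : vadd x (vscal m1 x) = vscal C0 x).
  { transitivity (vadd (vscal C1 x) (vscal m1 x)). rewrite vscal_1; reflexivity.
    rewrite <- vscal_addl. f_equal. apply Ceq; simpl; ring. }
  pose proof (vnorm_triangle B x (vscal m1 x)). rewrite H in H0.
  unfold m1 in H0; rewrite !vnorm_scal, Cnorm_C0, Cnorm_m1 in H0. lra.
Qed.

Lemma bm_bounded' : forall (A : BanachAlgebra) (X : BanachBimodule A),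
  exists K, 0 <= K /\ forall (a : A) (x : X),
    vnorm (lact a x) <= K * vnorm a * vnorm x /\ vnorm (ract x a) <= K * vnorm x * vnorm a.
Proof.
  intros A X. destruct (bm_bounded A X) as [K HK]. exists (Rabs K). split. apply Rabs_pos.
  intros a x. destruct (HK a x) as [H1 H2].
  pose proof (vnorm_nonneg _ a); pose proof (vnorm_nonneg _ x).
  assert (K <= Rabs K) by apply Rle_abs.
  assert (0 <= vnorm a * vnorm x) by (apply Rmult_le_pos; auto).
  split; nra.
Qed.

Lemma bl_zero : forall (B : BanachSpace) (f : B -> C),
  (forall x y, f (vadd x y) = Cadd (f x) (f y)) -> f vzero = C0.
Proof.
  intros B f H. pose proof (H vzero vzero). rewrite vadd_0 in H0.
  assert (f vzero = Cadd (f vzero) (Copp (f vzero))) by (rewrite H0 at 2; ring).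
  rewrite H1; ring.
Qed.

Lemma bl_opp : forall (B : BanachSpace) (f : B -> C),
  (forall x y, f (vadd x y) = Cadd (f x) (f y)) -> forall x, f (vopp x) = Copp (f x).
Proof.
  intros B f H x. pose proof (H x (vopp x)). rewrite vadd_opp, bl_zero in H0 by auto.
  assert (f (vopp x) = Cadd (Cadd (f x) (f (vopp x))) (Copp (f x))) by ring.
  rewrite H1, <- H0. ring.
Qed.

Section WMod.
Variable A : BanachAlgebra.
Variable X : BanachBimodule A.

Definition Zf := A -> X -> C.
Definition boundZ (F : Zf) (K : R) := forall (b : A) (x : X), Cnorm (F b x) <= K * vnorm b * vnorm x.
Definition isZ (F : Zf) : Prop :=
  (forall b x y, F b (vadd x y) = Cadd (F b x) (F b y)) /\
  (forall b c x, F b (vscal c x) = Cmul c (F b x)) /\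
  (forall b1 b2 x, F (vadd b1 b2) x = Cadd (F b1 x) (F b2 x)) /\
  (forall c b x, F (vscal c b) x = Cmul c (F b x)) /\
  (exists K, 0 <= K /\ boundZ F K).
Local Notation Zt := (sig isZ).

Lemma zeq (F G : Zt) : proj1_sig F = proj1_sig G -> F = G.
Proof. destruct F, G; simpl; intros; subst; f_equal; apply proof_irrelevance. Qed.

Lemma zeq' (F G : Zt) : (forall b x, proj1_sig F b x = proj1_sig G b x) -> F = G.
Proof. intros; apply zeq; do 2 (apply functional_extensionality; intro); auto. Qed.

Definition zaddf (F G : Zf) : Zf := fun b x => Cadd (F b x) (G b x).
Definition zscalf (c : C) (F : Zf) : Zf := fun b x => Cmul c (F b x).
Definition zractf (F : Zf) (a : A) : Zf := fun b x => Cadd (F (amul a b) x) (Copp (F a (lact b x))).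
Definition zlactf (a : A) (F : Zf) : Zf := fun b x => F b (ract x a).

Lemma nn (B : BanachSpace) (x : B) : 0 <= vnorm x.
Proof. apply vnorm_nonneg. Qed.

Lemma isZ_add F G : isZ F -> isZ G -> isZ (zaddf F G).
Proof.
  intros (F1&F2&F3&F4&K1&HK1&B1) (G1&G2&G3&G4&K2&HK2&B2); unfold zaddf.
  repeat split; intros.
  - rewrite F1, G1; ring.
  - rewrite F2, G2; ring.
  - rewrite F3, G3; ring.
  - rewrite F4, G4; ring.
  - exists (K1 + K2); split. lra. intros b x.
    eapply Rle_trans. apply Cnorm_add. specialize (B1 b x); specialize (B2 b x). nra.
Qed.

Lemma isZ_scal c F : isZ F -> isZ (zscalf c F).
Proof.
  intros (F1&F2&F3&F4&K1&HK1&B1); unfold zscalf.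
  repeat split; intros.
  - rewrite F1; ring.
  - rewrite F2; ring.
  - rewrite F3; ring.
  - rewrite F4; ring.
  - exists (Cnorm c * K1); split. apply Rmult_le_pos; auto; apply Cnorm_nonneg. intros b x.
    rewrite Cnorm_mul. specialize (B1 b x). pose proof (Cnorm_nonneg c).
    replace (Cnorm c * K1 * vnorm b * vnorm x) with (Cnorm c * (K1 * vnorm b * vnorm x)) by ring.
    apply Rmult_le_compat_l; auto.
Qed.

Lemma isZ_zero : isZ (fun _ _ => C0).
Proof.
  repeat split; intros; try ring. exists 0; split. lra. intros b x. rewrite Cnorm_C0. lra.
Qed.

Lemma zract_bound : forall KX, 0 <= KX -> (forall (a : A) (x : X), vnorm (lact a x) <= KX * vnorm a * vnorm x) ->
  forall F K a, 0 <= K -> boundZ F K -> boundZ (zractf F a) (K * (1 + KX) * vnorm a).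
Proof.
  intros KX HKX HX F K a HK B b x. unfold zractf.
  eapply Rle_trans. apply Cnorm_sub.
  pose proof (B (amul a b) x) as B1. pose proof (B a (lact b x)) as B2.
  pose proof (amul_norm A a b) as M1. pose proof (HX b x) as M2.
  pose proof (nn _ a); pose proof (nn _ b); pose proof (nn _ x).
  pose proof (nn _ (amul a b)); pose proof (nn _ (lact b x)).
  assert (K * vnorm (amul a b) * vnorm x <= K * (vnorm a * vnorm b) * vnorm x).
  { apply Rmult_le_compat_r; auto. apply Rmult_le_compat_l; auto. }
  assert (K * vnorm a * vnorm (lact b x) <= K * vnorm a * (KX * vnorm b * vnorm x)).
  { apply Rmult_le_compat_l; auto. apply Rmult_le_pos; auto. }
  nra.
Qed.

Lemma zlact_bound : forall KX, 0 <= KX -> (forall (a : A) (x : X), vnorm (ract x a) <= KX * vnorm x * vnorm a) ->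
  forall F K a, 0 <= K -> boundZ F K -> boundZ (zlactf a F) (K * KX * vnorm a).
Proof.
  intros KX HKX HX F K a HK B b x. unfold zlactf.
  eapply Rle_trans. apply B.
  pose proof (HX a x) as M2.
  pose proof (nn _ a); pose proof (nn _ b); pose proof (nn _ x); pose proof (nn _ (ract x a)).
  assert (K * vnorm b * vnorm (ract x a) <= K * vnorm b * (KX * vnorm x * vnorm a)).
  { apply Rmult_le_compat_l; auto. apply Rmult_le_pos; auto. }
  nra.
Qed.

Lemma isZ_ract F a : isZ F -> isZ (zractf F a).
Proof.
  intros (F1&F2&F3&F4&K1&HK1&B1); unfold zractf.
  repeat split; intros.
  - rewrite lact_addr, !F1; ring.
  - rewrite lact_scalr, !F2; ring.
  - rewrite amul_addr, lact_addl, !F3, !F1; ring.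
  - rewrite amul_scalr, lact_scall, !F4, !F2; ring.
  - destruct (bm_bounded' A X) as (KX & HKX & HX).
    exists (K1 * (1 + KX) * vnorm a); split.
    + pose proof (nn _ a). apply Rmult_le_pos; auto. nra.
    + apply (zract_bound KX HKX (fun a x => proj1 (HX a x))); auto.
Qed.

Lemma isZ_lact a F : isZ F -> isZ (zlactf a F).
Proof.
  intros (F1&F2&F3&F4&K1&HK1&B1); unfold zlactf.
  repeat split; intros.
  - rewrite ract_addl, !F1; ring.
  - rewrite ract_scall, !F2; ring.
  - rewrite !F3; ring.
  - rewrite !F4; ring.
  - destruct (bm_bounded' A X) as (KX & HKX & HX).
    exists (K1 * KX * vnorm a); split.
    + pose proof (nn _ a). apply Rmult_le_pos; auto. apply Rmult_le_pos; auto.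
    + apply (zlact_bound KX HKX (fun a x => proj2 (HX a x))); auto.
Qed.

Definition zadd (F G : Zt) : Zt := exist _ (zaddf (proj1_sig F) (proj1_sig G)) (isZ_add _ _ (proj2_sig F) (proj2_sig G)).
Definition zscal (c : C) (F : Zt) : Zt := exist _ (zscalf c (proj1_sig F)) (isZ_scal c _ (proj2_sig F)).
Definition zzero : Zt := exist _ (fun _ _ => C0) isZ_zero.
Definition zract (F : Zt) (a : A) : Zt := exist _ (zractf (proj1_sig F) a) (isZ_ract _ a (proj2_sig F)).
Definition zlact (a : A) (F : Zt) : Zt := exist _ (zlactf a (proj1_sig F)) (isZ_lact a _ (proj2_sig F)).

Lemma Zbnd (F : Zt) : exists K, 0 <= K /\ boundZ (proj1_sig F) K.
Proof. destruct F as [f Hf]; simpl; destruct Hf as (_&_&_&_&H); exact H. Qed.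

Definition wbound (w : Zt -> C) (M : R) := forall F K, 0 <= K -> boundZ (proj1_sig F) K -> Cnorm (w F) <= M * K.
Definition isW (w : Zt -> C) : Prop :=
  (forall F G, w (zadd F G) = Cadd (w F) (w G)) /\
  (forall c F, w (zscal c F) = Cmul c (w F)) /\
  (exists M, 0 <= M /\ wbound w M).
Local Notation Wt := (sig isW).

Lemma weq (w1 w2 : Wt) : (forall F, proj1_sig w1 F = proj1_sig w2 F) -> w1 = w2.
Proof.
  destruct w1 as [w1 p1], w2 as [w2 p2]; simpl; intros H.
  assert (w1 = w2) by (apply functional_extensionality; auto). subst. f_equal; apply proof_irrelevance.
Qed.

Lemma isW_zero : isW (fun _ => C0).
Proof. repeat split; intros; try ring. exists 0; split. lra. intros F K _ _. rewrite Cnorm_C0; lra. Qed.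

Lemma isW_add w1 w2 : isW w1 -> isW w2 -> isW (fun F => Cadd (w1 F) (w2 F)).
Proof.
  intros (A1&A2&M1&HM1&B1) (C1&C2&M2&HM2&B2). repeat split; intros.
  - rewrite A1, C1; ring.
  - rewrite A2, C2; ring.
  - exists (M1 + M2); split. lra. intros F K HK HB.
    eapply Rle_trans. apply Cnorm_add. specialize (B1 F K HK HB); specialize (B2 F K HK HB). nra.
Qed.

Lemma isW_scal c w : isW w -> isW (fun F => Cmul c (w F)).
Proof.
  intros (A1&A2&M1&HM1&B1). repeat split; intros.
  - rewrite A1; ring.
  - rewrite A2; ring.
  - exists (Cnorm c * M1); split. apply Rmult_le_pos; auto; apply Cnorm_nonneg. intros F K HK HB.
    rewrite Cnorm_mul. specialize (B1 F K HK HB). pose proof (Cnorm_nonneg c).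
    replace (Cnorm c * M1 * K) with (Cnorm c * (M1 * K)) by ring. apply Rmult_le_compat_l; auto.
Qed.

Lemma isW_opp w : isW w -> isW (fun F => Copp (w F)).
Proof.
  intros H. pose proof (isW_scal m1 w H).
  replace (fun F => Copp (w F)) with (fun F => Cmul m1 (w F)); auto.
  apply functional_extensionality; intro; apply Ceq; simpl; ring.
Qed.

Definition wzero : Wt := exist _ (fun _ => C0) isW_zero.
Definition wadd (w1 w2 : Wt) : Wt := exist _ _ (isW_add _ _ (proj2_sig w1) (proj2_sig w2)).
Definition wopp (w : Wt) : Wt := exist _ _ (isW_opp _ (proj2_sig w)).
Definition wscal (c : C) (w : Wt) : Wt := exist _ _ (isW_scal c _ (proj2_sig w)).

Definition WE (w : Wt) : R -> Prop := fun y => 0 <= - y /\ wbound (proj1_sig w) (- y).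

Lemma WE_bound w : bound (WE w).
Proof. exists 0. intros y [H _]. lra. Qed.
Lemma WE_ne w : exists y, WE w y.
Proof.
  destruct w as [w Hw]. pose proof Hw as (H1&H2&M&HM&B). exists (- M). unfold WE; simpl. rewrite Ropp_involutive. auto.
Qed.

Definition wnorm (w : Wt) : R := - proj1_sig (completeness (WE w) (WE_bound w) (WE_ne w)).

Lemma wnorm_nonneg w : 0 <= wnorm w.
Proof.
  unfold wnorm. destruct (completeness _ _ _) as [m [Hub Hl]]; simpl.
  assert (m <= 0). { apply Hl. intros y [H _]. lra. } lra.
Qed.

Lemma wnorm_le w M : 0 <= M -> wbound (proj1_sig w) M -> wnorm w <= M.
Proof.
  intros HM HB. unfold wnorm. destruct (completeness _ _ _) as [m [Hub Hl]]; simpl.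
  assert (- M <= m). { apply Hub. unfold WE. rewrite Ropp_involutive. auto. } lra.
Qed.

Lemma wnorm_spec w F K : 0 <= K -> boundZ (proj1_sig F) K -> Cnorm (proj1_sig w F) <= wnorm w * K.
Proof.
  intros HK HB. unfold wnorm. destruct (completeness _ _ _) as [m [Hub Hl]]; simpl.
  destruct (WE_ne w) as [y0 Hy0].
  destruct (Req_dec K 0) as [HK0|HK0].
  - subst K. destruct Hy0 as [_ B]. specialize (B F 0 HK HB). rewrite Rmult_0_r in *. exact B.
  - assert (HKp : 0 < K) by lra.
    destruct (Rle_dec (Cnorm (proj1_sig w F)) (- m * K)) as [Hc|Hc]; auto.
    exfalso. set (t := Cnorm (proj1_sig w F) / K).
    assert (Ht : - m < t). { unfold t. apply Rmult_lt_reg_r with K; auto. unfold Rdiv.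
      rewrite Rmult_assoc, Rinv_l by lra. lra. }
    assert (m <= - t).
    { apply Hl. intros y [Hy B]. specialize (B F K HK HB).
      change (Cnorm (proj1_sig w F) <= - y * K) in B.
      assert (t <= - y). { unfold t. unfold Rdiv. apply Rmult_le_reg_r with K; auto.
        rewrite Rmult_assoc, Rinv_l by lra. lra. }
      lra. }
    lra.
Qed.

Definition wap (w : Wt) : Zt -> C := proj1_sig w.

Lemma W_assoc : forall x y z, wadd x (wadd y z) = wadd (wadd x y) z.
Proof. intros; apply weq; intros; simpl; ring. Qed.
Lemma W_comm : forall x y, wadd x y = wadd y x.
Proof. intros; apply weq; intros; simpl; ring. Qed.
Lemma W_0 : forall x, wadd wzero x = x.
Proof. intros; apply weq; intros; simpl; ring. Qed.
Lemma W_opp : forall x, wadd x (wopp x) = wzero.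
Proof. intros; apply weq; intros; simpl; ring. Qed.
Lemma W_scal_addl : forall c d x, wscal (Cadd c d) x = wadd (wscal c x) (wscal d x).
Proof. intros; apply weq; intros; simpl; ring. Qed.
Lemma W_scal_addr : forall c x y, wscal c (wadd x y) = wadd (wscal c x) (wscal c y).
Proof. intros; apply weq; intros; simpl; ring. Qed.
Lemma W_scal_mul : forall c d x, wscal (Cmul c d) x = wscal c (wscal d x).
Proof. intros; apply weq; intros; simpl; ring. Qed.
Lemma W_scal_1 : forall x, wscal C1 x = x.
Proof. intros; apply weq; intros; simpl; ring. Qed.

Lemma W_norm_eq0 : forall x, wnorm x = 0 -> x = wzero.
Proof.
  intros w H. apply weq; intros F. simpl. destruct (Zbnd F) as (K & HK & HB).
  pose proof (wnorm_spec w F K HK HB). rewrite H in H0. rewrite Rmult_0_l in H0.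
  apply Cnorm_eq0. pose proof (Cnorm_nonneg (proj1_sig w F)). lra.
Qed.

Lemma W_norm_0 : wnorm wzero = 0.
Proof.
  apply Rle_antisym; [|apply wnorm_nonneg]. apply wnorm_le. lra.
  intros F K HK HB; simpl. rewrite Cnorm_C0; lra.
Qed.

Lemma W_triangle : forall x y, wnorm (wadd x y) <= wnorm x + wnorm y.
Proof.
  intros w1 w2. apply wnorm_le. pose proof (wnorm_nonneg w1); pose proof (wnorm_nonneg w2); lra.
  intros F K HK HB; simpl. eapply Rle_trans. apply Cnorm_add.
  pose proof (wnorm_spec w1 F K HK HB); pose proof (wnorm_spec w2 F K HK HB). nra.
Qed.

Lemma W_norm_scal : forall c x, wnorm (wscal c x) = Cnorm c * wnorm x.
Proof.
  intros c w. pose proof (Cnorm_nonneg c) as Hc. pose proof (wnorm_nonneg w) as Hw.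
  apply Rle_antisym.
  - apply wnorm_le. apply Rmult_le_pos; auto.
    intros F K HK HB; simpl. rewrite Cnorm_mul. pose proof (wnorm_spec w F K HK HB).
    rewrite Rmult_assoc. apply Rmult_le_compat_l; auto.
  - destruct (Req_dec (Cnorm c) 0) as [H0|H0].
    + rewrite H0, Rmult_0_l. apply wnorm_nonneg.
    + assert (Hcp : 0 < Cnorm c) by lra.
      assert (wnorm w <= wnorm (wscal c w) / Cnorm c).
      { apply wnorm_le. unfold Rdiv. apply Rmult_le_pos. apply wnorm_nonneg. left; apply Rinv_0_lt_compat; auto.
        intros F K HK HB. pose proof (wnorm_spec (wscal c w) F K HK HB) as H1. simpl in H1.
        rewrite Cnorm_mul in H1. unfold Rdiv.
        apply Rmult_le_reg_l with (Cnorm c); auto.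
        replace (Cnorm c * (wnorm (wscal c w) * / Cnorm c * K)) with (wnorm (wscal c w) * K).
        exact H1. field; lra. }
      apply Rmult_le_reg_r with (/ Cnorm c). apply Rinv_0_lt_compat; auto.
      replace (Cnorm c * wnorm w * / Cnorm c) with (wnorm w) by (field; lra). exact H.
Qed.

Definition Ccv (s : nat -> C) (z : C) := forall eps, 0 < eps -> exists N, forall n, (N <= n)%nat ->
  Cnorm (Cadd (s n) (Copp z)) < eps.
Definition Ccauchy (s : nat -> C) := forall eps, 0 < eps -> exists N, forall m n, (N <= m)%nat -> (N <= n)%nat ->
  Cnorm (Cadd (s m) (Copp (s n))) < eps.

Lemma C_complete s : Ccauchy s -> exists z, Ccv s z.
Proof.
  intros H.
  assert (H1 : Cauchy_crit (fun n => Re (s n))).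
  { intros eps He. destruct (H eps He) as [N HN]. exists N. intros n m Hn Hm.
    unfold Rdist. pose proof (Cnorm_Re (Cadd (s n) (Copp (s m)))). specialize (HN n m Hn Hm).
    simpl in H0. unfold Rminus. lra. }
  assert (H2 : Cauchy_crit (fun n => Im (s n))).
  { intros eps He. destruct (H eps He) as [N HN]. exists N. intros n m Hn Hm.
    unfold Rdist. pose proof (Cnorm_Im (Cadd (s n) (Copp (s m)))). specialize (HN n m Hn Hm).
    simpl in H0. unfold Rminus. lra. }
  destruct (R_complete _ H1) as [l1 Hl1]. destruct (R_complete _ H2) as [l2 Hl2].
  exists (mkC l1 l2). intros eps He.
  destruct (Hl1 (eps/2)) as [N1 HN1]. lra. destruct (Hl2 (eps/2)) as [N2 HN2]. lra.
  exists (max N1 N2). intros n Hn.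
  specialize (HN1 n ltac:(lia)). specialize (HN2 n ltac:(lia)). unfold Rdist in *.
  eapply Rle_lt_trans. apply Cnorm_ReIm. simpl. unfold Rminus in *. lra.
Qed.

Lemma Ccv_ext s t z : (forall n, s n = t n) -> Ccv s z -> Ccv t z.
Proof. intros H Hc eps He. destruct (Hc eps He) as [N HN]. exists N. intros n Hn. rewrite <- H. auto. Qed.

Lemma Ccv_close s z t c N : Ccv s z -> (forall n, (N <= n)%nat -> Cnorm (Cadd (s n) (Copp t)) <= c) ->
  Cnorm (Cadd z (Copp t)) <= c.
Proof.
  intros Hc Hb. apply Rnot_lt_le. intro Hlt.
  set (e := Cnorm (Cadd z (Copp t)) - c) in *.
  destruct (Hc e) as [N1 HN1]. unfold e; lra.
  specialize (HN1 (max N N1) ltac:(lia)). specialize (Hb (max N N1) ltac:(lia)).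
  pose proof (Cnorm_add (Cadd z (Copp (s (max N N1)))) (Cadd (s (max N N1)) (Copp t))).
  replace (Cadd (Cadd z (Copp (s (max N N1)))) (Cadd (s (max N N1)) (Copp t))) with (Cadd z (Copp t)) in H by ring.
  rewrite Cnorm_sym in HN1. unfold e in *. lra.
Qed.

Lemma Ccv_unique s z1 z2 : Ccv s z1 -> Ccv s z2 -> z1 = z2.
Proof.
  intros H1 H2.
  assert (Cnorm (Cadd z1 (Copp z2)) = 0).
  { apply Rle_antisym; [|apply Cnorm_nonneg]. apply Rnot_lt_le. intro Hlt.
    set (e := Cnorm (Cadd z1 (Copp z2))) in *.
    destruct (H1 (e/2)) as [N1 HN1]. lra. destruct (H2 (e/2)) as [N2 HN2]. lra.
    specialize (HN1 (max N1 N2) ltac:(lia)). specialize (HN2 (max N1 N2) ltac:(lia)).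
    pose proof (Cnorm_add (Cadd z1 (Copp (s (max N1 N2)))) (Cadd (s (max N1 N2)) (Copp z2))).
    replace (Cadd (Cadd z1 (Copp (s (max N1 N2)))) (Cadd (s (max N1 N2)) (Copp z2))) with (Cadd z1 (Copp z2)) in H by ring.
    rewrite Cnorm_sym in HN1. unfold e in *. lra. }
  apply Cnorm_eq0 in H. replace z1 with (Cadd (Cadd z1 (Copp z2)) z2) by ring. rewrite H. ring.
Qed.

Lemma Ccv_add s t z w : Ccv s z -> Ccv t w -> Ccv (fun n => Cadd (s n) (t n)) (Cadd z w).
Proof.
  intros H1 H2 eps He. destruct (H1 (eps/2)) as [N1 HN1]. lra. destruct (H2 (eps/2)) as [N2 HN2]. lra.
  exists (max N1 N2). intros n Hn. specialize (HN1 n ltac:(lia)). specialize (HN2 n ltac:(lia)).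
  pose proof (Cnorm_add (Cadd (s n) (Copp z)) (Cadd (t n) (Copp w))).
  replace (Cadd (Cadd (s n) (Copp z)) (Cadd (t n) (Copp w))) with (Cadd (Cadd (s n) (t n)) (Copp (Cadd z w))) in H by ring.
  lra.
Qed.

Lemma Ccv_scal c s z : Ccv s z -> Ccv (fun n => Cmul c (s n)) (Cmul c z).
Proof.
  intros H eps He. pose proof (Cnorm_nonneg c).
  destruct (H (eps / (Cnorm c + 1))) as [N HN]. apply Rdiv_lt_0_compat; lra.
  exists N. intros n Hn. specialize (HN n Hn).
  replace (Cadd (Cmul c (s n)) (Copp (Cmul c z))) with (Cmul c (Cadd (s n) (Copp z))) by ring.
  rewrite Cnorm_mul.
  assert (Cnorm c * Cnorm (Cadd (s n) (Copp z)) <= Cnorm c * (eps / (Cnorm c + 1))).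
  { apply Rmult_le_compat_l; auto. lra. }
  assert (Cnorm c * (eps / (Cnorm c + 1)) < eps).
  { apply Rmult_lt_reg_r with (Cnorm c + 1). lra. unfold Rdiv.
    replace (Cnorm c * (eps * / (Cnorm c + 1)) * (Cnorm c + 1)) with (Cnorm c * eps) by (field; lra). nra. }
  lra.
Qed.

Lemma W_complete : forall u : nat -> Wt,
    (forall eps, 0 < eps -> exists N, forall m n, (N <= m)%nat -> (N <= n)%nat ->
        wnorm (wadd (u m) (wopp (u n))) < eps) ->
    exists l, forall eps, 0 < eps -> exists N, forall n, (N <= n)%nat ->
        wnorm (wadd (u n) (wopp l)) < eps.
Proof.
  intros u Hu.
  assert (Hdiff : forall m n F K, 0 <= K -> boundZ (proj1_sig F) K ->
    Cnorm (Cadd (proj1_sig (u m) F) (Copp (proj1_sig (u n) F))) <= wnorm (wadd (u m) (wopp (u n))) * K).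
  { intros m n F K HK HB. apply (wnorm_spec (wadd (u m) (wopp (u n))) F K HK HB). }
  assert (Hpt : forall F, Ccauchy (fun n => proj1_sig (u n) F)).
  { intros F eps He. destruct (Zbnd F) as (K & HK & HB).
    destruct (Hu (eps / (K + 1))) as [N HN]. apply Rdiv_lt_0_compat; lra.
    exists N. intros m n Hm Hn. specialize (HN m n Hm Hn). specialize (Hdiff m n F K HK HB).
    assert (wnorm (wadd (u m) (wopp (u n))) * K <= eps / (K+1) * K).
    { apply Rmult_le_compat_r; auto. lra. }
    assert (eps / (K+1) * K < eps).
    { apply Rmult_lt_reg_r with (K + 1). lra. unfold Rdiv.
      replace (eps * / (K + 1) * K * (K + 1)) with (eps * K) by (field; lra). nra. }
    lra. }
  set (L := fun F => epsilon (inhabits C0) (fun z => Ccv (fun n => proj1_sig (u n) F) z)).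
  assert (HL : forall F, Ccv (fun n => proj1_sig (u n) F) (L F)).
  { intros F. unfold L. apply epsilon_spec. apply C_complete, Hpt. }
  assert (HW : isW L).
  { split; [|split].
    - intros F G. apply (Ccv_unique (fun n => proj1_sig (u n) (zadd F G))). apply HL.
      apply (Ccv_ext (fun n => Cadd (proj1_sig (u n) F) (proj1_sig (u n) G))).
      intros n. destruct (u n) as [w Hw]; simpl; pose proof Hw as (Hw1&Hw2&Hw3). symmetry; apply Hw1.
      apply Ccv_add; apply HL.
    - intros c F. apply (Ccv_unique (fun n => proj1_sig (u n) (zscal c F))). apply HL.
      apply (Ccv_ext (fun n => Cmul c (proj1_sig (u n) F))).
      intros n. destruct (u n) as [w Hw]; simpl; pose proof Hw as (Hw1&Hw2&Hw3). symmetry; apply Hw2.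
      apply Ccv_scal; apply HL.
    - destruct (Hu 1) as [N HN]. lra.
      exists (wnorm (u N) + 1). split. pose proof (wnorm_nonneg (u N)); lra.
      intros F K HK HB.
      replace (L F) with (Cadd (L F) (Copp C0)) by ring.
      apply (Ccv_close _ _ _ _ N (HL F)). intros n Hn.
      replace (Cadd (proj1_sig (u n) F) (Copp C0)) with
        (Cadd (Cadd (proj1_sig (u n) F) (Copp (proj1_sig (u N) F))) (proj1_sig (u N) F)) by ring.
      eapply Rle_trans. apply Cnorm_add.
      pose proof (Hdiff n N F K HK HB). pose proof (wnorm_spec (u N) F K HK HB).
      specialize (HN n N Hn (le_n N)).
      assert (wnorm (wadd (u n) (wopp (u N))) * K <= 1 * K) by (apply Rmult_le_compat_r; lra).
      lra. }
  exists (exist _ L HW). intros eps He.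
  destruct (Hu (eps/2)) as [N HN]. lra. exists N. intros n Hn.
  assert (wnorm (wadd (u n) (wopp (exist _ L HW))) <= eps / 2).
  { apply wnorm_le. lra. intros F K HK HB. simpl.
    rewrite Cnorm_sym. apply (Ccv_close _ _ _ _ N (HL F)). intros m Hm.
    specialize (HN m n Hm Hn). specialize (Hdiff m n F K HK HB).
    assert (wnorm (wadd (u m) (wopp (u n))) * K <= eps / 2 * K) by (apply Rmult_le_compat_r; lra).
    lra. }
  lra.
Qed.

Definition Wspace : BanachSpace := {|
  bs_car := Wt; vzero := wzero; vadd := wadd; vopp := wopp; vscal := wscal; vnorm := wnorm;
  vadd_assoc := W_assoc; vadd_comm := W_comm; vadd_0 := W_0; vadd_opp := W_opp;
  vscal_addl := W_scal_addl; vscal_addr := W_scal_addr; vscal_mul := W_scal_mul; vscal_1 := W_scal_1;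
  vnorm_eq0 := W_norm_eq0; vnorm_0 := W_norm_0; vnorm_triangle := W_triangle; vnorm_scal := W_norm_scal;
  vcomplete := W_complete |}.

Lemma zract_add F G a : zract (zadd F G) a = zadd (zract F a) (zract G a).
Proof. apply zeq'; intros; simpl; unfold zractf, zaddf; ring. Qed.
Lemma zract_scal c F a : zract (zscal c F) a = zscal c (zract F a).
Proof. apply zeq'; intros; simpl; unfold zractf, zscalf; ring. Qed.
Lemma zlact_add F G a : zlact a (zadd F G) = zadd (zlact a F) (zlact a G).
Proof. apply zeq'; intros; simpl; unfold zlactf, zaddf; ring. Qed.
Lemma zlact_scal c F a : zlact a (zscal c F) = zscal c (zlact a F).
Proof. apply zeq'; intros; simpl; unfold zlactf, zscalf; ring. Qed.

Lemma isW_lact a (w : Wt) : isW (fun F => proj1_sig w (zract F a)).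
Proof.
  destruct w as [w Hw]; simpl. pose proof Hw as (W1&W2&M&HM&B).
  destruct (bm_bounded' A X) as (KX & HKX & HX).
  repeat split; intros.
  - rewrite zract_add; auto.
  - rewrite zract_scal; auto.
  - exists (M * ((1 + KX) * vnorm a)); split.
    + apply Rmult_le_pos; auto. pose proof (nn _ a). apply Rmult_le_pos; lra.
    + intros F K HK HBF. eapply Rle_trans. apply (B (zract F a) (K * (1 + KX) * vnorm a)).
      pose proof (nn _ a). apply Rmult_le_pos; [apply Rmult_le_pos|]; lra.
      apply (zract_bound KX HKX (fun a x => proj1 (HX a x))); auto.
      right; ring.
Qed.

Lemma isW_ract a (w : Wt) : isW (fun F => proj1_sig w (zlact a F)).
Proof.
  destruct w as [w Hw]; simpl. pose proof Hw as (W1&W2&M&HM&B).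
  destruct (bm_bounded' A X) as (KX & HKX & HX).
  repeat split; intros.
  - rewrite zlact_add; auto.
  - rewrite zlact_scal; auto.
  - exists (M * (KX * vnorm a)); split.
    + apply Rmult_le_pos; auto. pose proof (nn _ a). apply Rmult_le_pos; lra.
    + intros F K HK HBF. eapply Rle_trans. apply (B (zlact a F) (K * KX * vnorm a)).
      pose proof (nn _ a). apply Rmult_le_pos; [apply Rmult_le_pos|]; lra.
      apply (zlact_bound KX HKX (fun a x => proj2 (HX a x))); auto.
      right; ring.
Qed.

Definition wlact (a : A) (w : Wt) : Wt := exist _ _ (isW_lact a w).
Definition wract (w : Wt) (a : A) : Wt := exist _ _ (isW_ract a w).

Ltac zdes F := let f := fresh "f" in let Hf := fresh "Hf" in
  destruct F as [f Hf]; let F1 := fresh "F1" in let F2 := fresh "F2" in let F3 := fresh "F3" in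
  let F4 := fresh "F4" in let F5 := fresh "F5" in pose proof Hf as (F1&F2&F3&F4&F5).

Lemma WM_lact_addl : forall a b x, wlact (vadd a b) x = wadd (wlact a x) (wlact b x).
Proof.
  intros a b w. apply weq; intros F; simpl. rewrite <- (proj1 (proj2_sig w)). f_equal.
  apply zeq'; intros c x. zdes F. simpl. unfold zractf, zaddf. rewrite amul_addl, F3, F3. ring.
Qed.
Lemma WM_lact_addr : forall a x y, wlact a (wadd x y) = wadd (wlact a x) (wlact a y).
Proof. intros; apply weq; intros; simpl; ring. Qed.
Lemma WM_lact_scall : forall z a x, wlact (vscal z a) x = wscal z (wlact a x).
Proof.
  intros z a w. apply weq; intros F; simpl. rewrite <- (proj1 (proj2 (proj2_sig w))). f_equal.
  apply zeq'; intros c x. zdes F. simpl. unfold zractf, zscalf. rewrite amul_scall, F4, F4. ring.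
Qed.
Lemma WM_lact_scalr : forall z a x, wlact a (wscal z x) = wscal z (wlact a x).
Proof. intros; apply weq; intros; simpl; ring. Qed.
Lemma WM_ract_addl : forall x y a, wract (wadd x y) a = wadd (wract x a) (wract y a).
Proof. intros; apply weq; intros; simpl; ring. Qed.
Lemma WM_ract_addr : forall x a b, wract x (vadd a b) = wadd (wract x a) (wract x b).
Proof.
  intros w a b. apply weq; intros F; simpl. rewrite <- (proj1 (proj2_sig w)). f_equal.
  apply zeq'; intros c x. zdes F. simpl. unfold zlactf, zaddf. rewrite ract_addr, F1. ring.
Qed.
Lemma WM_ract_scall : forall z x a, wract (wscal z x) a = wscal z (wract x a).
Proof. intros; apply weq; intros; simpl; ring. Qed.
Lemma WM_ract_scalr : forall z x a, wract x (vscal z a) = wscal z (wract x a).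
Proof.
  intros z w a. apply weq; intros F; simpl. rewrite <- (proj1 (proj2 (proj2_sig w))). f_equal.
  apply zeq'; intros c x. zdes F. simpl. unfold zlactf, zscalf. rewrite ract_scalr, F2. ring.
Qed.
Lemma WM_lact_assoc : forall a b x, wlact (amul a b) x = wlact a (wlact b x).
Proof.
  intros a b w. apply weq; intros F; simpl. f_equal.
  apply zeq'; intros c x. simpl. unfold zractf. rewrite amul_assoc, lact_assoc. ring.
Qed.
Lemma WM_ract_assoc : forall x a b, wract x (amul a b) = wract (wract x a) b.
Proof.
  intros w a b. apply weq; intros F; simpl. f_equal.
  apply zeq'; intros c x. simpl. unfold zlactf. rewrite ract_assoc. reflexivity.
Qed.
Lemma WM_lract_assoc : forall a x b, wract (wlact a x) b = wlact a (wract x b).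
Proof.
  intros a w b. apply weq; intros F; simpl. f_equal.
  apply zeq'; intros c x. simpl. unfold zlactf, zractf. rewrite lract_assoc. reflexivity.
Qed.
Lemma WM_bounded : exists K, forall a x,
    wnorm (wlact a x) <= K * vnorm a * wnorm x /\ wnorm (wract x a) <= K * wnorm x * vnorm a.
Proof.
  destruct (bm_bounded' A X) as (KX & HKX & HX). exists (1 + KX). intros a w.
  pose proof (nn _ a). pose proof (wnorm_nonneg w).
  split.
  - apply wnorm_le. apply Rmult_le_pos; [apply Rmult_le_pos|]; lra.
    intros F K HK HB. simpl. eapply Rle_trans. apply (wnorm_spec w (zract F a) (K * (1 + KX) * vnorm a)).
    apply Rmult_le_pos; [apply Rmult_le_pos|]; lra.
    apply (zract_bound KX HKX (fun a x => proj1 (HX a x))); auto.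
    right; ring.
  - apply wnorm_le. apply Rmult_le_pos; [apply Rmult_le_pos|]; lra.
    intros F K HK HB. simpl. eapply Rle_trans. apply (wnorm_spec w (zlact a F) (K * KX * vnorm a)).
    apply Rmult_le_pos; [apply Rmult_le_pos|]; lra.
    apply (zlact_bound KX HKX (fun a x => proj2 (HX a x))); auto.
    assert (wnorm w * (K * KX * vnorm a) <= wnorm w * (K * (1+KX) * vnorm a)).
    { apply Rmult_le_compat_l; auto. apply Rmult_le_compat_r; auto. nra. }
    nra.
Qed.

Definition Wmod : BanachBimodule A := {|
  bm_sp := Wspace; lact := wlact; ract := wract;
  lact_addl := WM_lact_addl; lact_addr := WM_lact_addr; lact_scall := WM_lact_scall; lact_scalr := WM_lact_scalr;
  ract_addl := WM_ract_addl; ract_addr := WM_ract_addr; ract_scall := WM_ract_scall; ract_scalr := WM_ract_scalr;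
  lact_assoc := WM_lact_assoc; ract_assoc := WM_ract_assoc; lract_assoc := WM_lract_assoc;
  bm_bounded := WM_bounded |}.

Lemma isW_ev (b : A) (x : X) : isW (fun F => proj1_sig F b x).
Proof.
  repeat split; intros; try reflexivity.
  exists (vnorm b * vnorm x). split. apply Rmult_le_pos; apply nn.
  intros F K HK HB. specialize (HB b x). nra.
Qed.
Definition ev (b : A) (x : X) : Wt := exist _ _ (isW_ev b x).

Lemma ev_norm b x : wnorm (ev b x) <= vnorm b * vnorm x.
Proof.
  apply wnorm_le. apply Rmult_le_pos; apply nn.
  intros F K HK HB. simpl. specialize (HB b x). nra.
Qed.
Lemma ev_ract b x a : wract (ev b x) a = ev b (ract x a).
Proof. apply weq; intros; reflexivity. Qed.
Lemma ev_lact b x a : wlact a (ev b x) = wadd (ev (amul a b) x) (wopp (ev a (lact b x))).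
Proof. apply weq; intros; reflexivity. Qed.
Lemma ev_addx b x y : ev b (vadd x y) = wadd (ev b x) (ev b y).
Proof. apply weq; intros F; zdes F; simpl; auto. Qed.
Lemma ev_scalx b c x : ev b (vscal c x) = wscal c (ev b x).
Proof. apply weq; intros F; zdes F; simpl; auto. Qed.
Lemma ev_lin a c b x : ev (vadd a (vscal c b)) x = wadd (ev a x) (wscal c (ev b x)).
Proof. apply weq; intros F; zdes F; simpl. rewrite F3, F4. reflexivity. Qed.

Lemma wap_zero (w : Wt) : proj1_sig w zzero = C0.
Proof.
  destruct w as [w Hw]; simpl. pose proof Hw as (W1&W2&_).
  assert (zzero = zscal C0 zzero) by (apply zeq'; intros; simpl; unfold zscalf; ring).
  rewrite H, W2. ring.
Qed.

End WMod.

Arguments ev {A X}.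
Arguments wadd {A X}. Arguments wopp {A X}. Arguments wscal {A X}. Arguments wzero {A X}.
Arguments wlact {A X}. Arguments wract {A X}. Arguments wnorm {A X}.
Arguments zadd {A X}. Arguments zscal {A X}. Arguments zzero {A X}. Arguments zlact {A X}. Arguments zract {A X}.

Definition csgn (k : nat) (z : C) : C := if Nat.even k then z else Copp z.
Definition Csum (h : nat -> C) (ks : list nat) : C := fold_right (fun k acc => Cadd (h k) acc) C0 ks.

Lemma Csum_app1 h ks k : Csum h (ks ++ [k]) = Cadd (Csum h ks) (h k).
Proof. induction ks; simpl. ring. rewrite IHks. ring. Qed.

Lemma Csum_ext h1 h2 ks : (forall k, In k ks -> h1 k = h2 k) -> Csum h1 ks = Csum h2 ks.
Proof. induction ks; simpl; intros; auto. rewrite H, IHks; auto. Qed.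

Lemma fold_Fadd {A : BanachAlgebra} {X : BanachBimodule A} (g : nat -> Fn X) ks x :
  fold_right (fun k acc => Fadd (g k) acc) Fzero ks x = Csum (fun k => g k x) ks.
Proof. induction ks; simpl; auto. unfold Fadd at 1. rewrite IHks. reflexivity. Qed.

Lemma sgn_app {A : BanachAlgebra} {X : BanachBimodule A} k (f : Fn X) x : sgn k f x = csgn k (f x).
Proof. unfold sgn, csgn. destruct (Nat.even k); reflexivity. Qed.

Lemma cob_cons {A : BanachAlgebra} {X : BanachBimodule A} n (T : Cochain X) a1 rest x :
  coboundary n T (a1 :: rest) x =
  Cadd (T rest (ract x a1))
    (Cadd (Csum (fun k => csgn k (T (mergeAt (k - 1) (a1 :: rest)) x)) (seq 1 n))
          (csgn (S n) (T (removelast (a1 :: rest)) (lact (last (a1 :: rest) a1) x)))).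
Proof.
  unfold coboundary. unfold Fadd at 1 2. rewrite fold_Fadd, sgn_app.
  unfold dlact, dract. f_equal. f_equal. apply Csum_ext. intros; apply sgn_app.
Qed.

Lemma mergeAt_app {A : BanachAlgebra} : forall j (l t : list A), (S j < length l)%nat ->
  mergeAt j (l ++ t) = mergeAt j l ++ t.
Proof.
  induction j; intros l t H.
  - destruct l as [|a [|b l]]; simpl in *; try lia. reflexivity.
  - destruct l as [|a l]; simpl in *; try lia. rewrite IHj by lia. reflexivity.
Qed.

Lemma length_mergeAt {A : BanachAlgebra} : forall j (l : list A), (S j < length l)%nat ->
  length (mergeAt j l) = pred (length l).
Proof.
  induction j; intros l H.
  - destruct l as [|a [|b l]]; simpl in *; try lia.
  - destruct l as [|a l]; simpl in *; try lia. rewrite IHj by lia. destruct l; simpl in *; lia.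
Qed.

Lemma mergeAt_last {A : BanachAlgebra} : forall j (l : list A) b d, length l = S j ->
  mergeAt j (l ++ [b]) = removelast l ++ [amul (last l d) b].
Proof.
  induction j; intros l b d H.
  - destruct l as [|a [|c l]]; simpl in *; try lia. reflexivity.
  - destruct l as [|a l]; simpl in *; try lia.
    destruct l as [|c l]; simpl in *; try lia.
    pose proof (IHj (c :: l) b d ltac:(simpl; lia)) as E. simpl in E. rewrite E. reflexivity.
Qed.

Lemma last_default {T : Type} : forall (l : list T) d1 d2, l <> [] -> last l d1 = last l d2.
Proof.
  induction l; intros; [congruence|]. destruct l; simpl; auto. apply IHl. congruence.
Qed.

Lemma length_removelast {T : Type} : forall (l : list T), length (removelast l) = pred (length l).
Proof.
  induction l; simpl; auto. destruct l; simpl in *; auto.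
Qed.

Lemma set_nth_app {T : Type} : forall i (l t : list T) v, (i < length l)%nat ->
  set_nth i (l ++ t) v = set_nth i l v ++ t.
Proof.
  unfold set_nth. intros i l t v H. rewrite firstn_app, skipn_app.
  replace (i - length l)%nat with 0%nat by lia. simpl firstn.
  replace (S i - length l)%nat with 0%nat by lia. simpl skipn. rewrite app_nil_r.
  rewrite <- app_assoc. reflexivity.
Qed.

Lemma set_nth_last {T : Type} : forall (l : list T) u v,
  set_nth (length l) (l ++ [u]) v = l ++ [v].
Proof.
  unfold set_nth. intros. rewrite firstn_app, skipn_app, Nat.sub_diag, firstn_all.
  rewrite (skipn_all2 l) by lia. replace (S (length l) - length l)%nat with 1%nat by lia.
  simpl. rewrite !app_nil_r. reflexivity.
Qed.

Lemma length_set_nth {T : Type} : forall i (l : list T) v, (i < length l)%nat ->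
  length (set_nth i l v) = length l.
Proof.
  unfold set_nth. intros. rewrite length_app, length_firstn. cbn [length]. rewrite length_skipn. lia.
Qed.

Lemma prod_norms_app {A : BanachAlgebra} : forall (l : list A) b,
  prod_norms (l ++ [b]) = prod_norms l * vnorm b.
Proof. induction l; intros; simpl. ring. rewrite IHl. ring. Qed.

Lemma prod_norms_nonneg {A : BanachAlgebra} : forall (l : list A), 0 <= prod_norms l.
Proof. induction l; simpl. lra. apply Rmult_le_pos; auto. apply vnorm_nonneg. Qed.

Lemma csgn_S k z : csgn (S k) z = Copp (csgn k z).
Proof.
  revert z; induction k; intros z. reflexivity.
  change (csgn (S (S k)) z) with (csgn k z). rewrite IHk. ring.
Qed.

Lemma csgn_sub k a b : csgn k (Cadd a (Copp b)) = Cadd (csgn k a) (Copp (csgn k b)).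
Proof. unfold csgn; destruct (Nat.even k); ring. Qed.

Lemma ev_ract' {A : BanachAlgebra} {X : BanachBimodule A} (b : A) (x : X) a :
  @ract A (Wmod A X) (ev b x) a = ev b (ract x a).
Proof. exact (ev_ract A X b x a). Qed.
Lemma ev_lact' {A : BanachAlgebra} {X : BanachBimodule A} (b : A) (x : X) a :
  @lact A (Wmod A X) a (ev b x) = wadd (ev (amul a b) x) (wopp (ev a (lact b x))).
Proof. exact (ev_lact A X b x a). Qed.

Lemma flatten_cob {A : BanachAlgebra} {X : BanachBimodule A} (m : nat) (F : Cochain X)
  (G : Cochain (Wmod A X)) :
  (forall l' b x, length l' = m -> F (l' ++ [b]) x = G l' (ev b x)) ->
  (forall l', length l' = m -> forall w1 w2, G l' (wadd w1 w2) = Cadd (G l' w1) (G l' w2)) ->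
  forall l b x, length l = S m -> coboundary (S m) F (l ++ [b]) x = coboundary m G l (ev b x).
Proof.
  intros HFG HG l b x Hl. destruct l as [|a1 r']; [simpl in Hl; lia|].
  simpl in Hl. injection Hl as Hl.
  change ((a1 :: r') ++ [b]) with (a1 :: (r' ++ [b])).
  rewrite !cob_cons.
  rewrite HFG by auto. rewrite ev_ract'.
  rewrite seq_S, Csum_app1.
  change (a1 :: r' ++ [b]) with ((a1 :: r') ++ [b]).
  rewrite removelast_last, last_last.
  set (l := a1 :: r') in *.
  assert (Hlen : length l = S m) by (unfold l; simpl; auto).
  assert (Hne : l <> []) by (unfold l; congruence).
  set (aL := last l a1).
  set (rl := removelast l).
  assert (Hrl : length rl = m) by (unfold rl; rewrite length_removelast, Hlen; reflexivity).
  assert (E1 : Csum (fun k => csgn k (F (mergeAt (k - 1) (l ++ [b])) x)) (seq 1 m) =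
               Csum (fun k => csgn k (G (mergeAt (k - 1) l) (ev b x))) (seq 1 m)).
  { apply Csum_ext. intros k Hk. apply in_seq in Hk. rewrite mergeAt_app by lia.
    rewrite HFG; auto. rewrite length_mergeAt by lia. rewrite Hlen; reflexivity. }
  rewrite E1.
  replace (1 + m - 1)%nat with m by lia.
  rewrite (mergeAt_last m l b a1 Hlen). fold rl. fold aL.
  rewrite HFG by auto.
  assert (E2 : F l (lact b x) = G rl (ev aL (lact b x))).
  { rewrite <- HFG by auto. unfold rl, aL. rewrite <- app_removelast_last by auto. reflexivity. }
  rewrite E2, ev_lact', HG by auto.
  assert (Hop : forall w, G rl (wopp w) = Copp (G rl w))
    by (intro w; exact (bl_opp (Wspace A X) (G rl) (HG rl Hrl) w)).
  rewrite Hop.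
  replace (1 + m)%nat with (S m) by lia.
  rewrite !csgn_S, csgn_sub. ring.
Qed.

Notation ZT A X := (sig (isZ A X)).
Notation WT A X := (sig (isW A X)).

Definition zsgn {A : BanachAlgebra} {X : BanachBimodule A} (k : nat) (F : ZT A X) : ZT A X := if Nat.even k then F else zscal m1 F.
Definition zsum {A : BanachAlgebra} {X : BanachBimodule A} (h : nat -> ZT A X) (ks : list nat) : ZT A X :=
  fold_right (fun k acc => zadd (h k) acc) zzero ks.

Lemma Cmul_m1 z : Cmul m1 z = Copp z.
Proof. apply Ceq; unfold m1; simpl; ring. Qed.

Lemma wap_add {A : BanachAlgebra} {X : BanachBimodule A} (w : WT A X) F G : proj1_sig w (zadd F G) = Cadd (proj1_sig w F) (proj1_sig w G).
Proof. exact (proj1 (proj2_sig w) F G). Qed.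
Lemma wap_scal {A : BanachAlgebra} {X : BanachBimodule A} (w : WT A X) c F : proj1_sig w (zscal c F) = Cmul c (proj1_sig w F).
Proof. exact (proj1 (proj2 (proj2_sig w)) c F). Qed.

Lemma wap_zsum {A : BanachAlgebra} {X : BanachBimodule A} (w : WT A X) h ks : proj1_sig w (zsum h ks) = Csum (fun k => proj1_sig w (h k)) ks.
Proof. induction ks; simpl. apply wap_zero. rewrite wap_add, IHks. reflexivity. Qed.

Lemma wap_zsgn {A : BanachAlgebra} {X : BanachBimodule A} (w : WT A X) k F : proj1_sig w (zsgn k F) = csgn k (proj1_sig w F).
Proof. unfold zsgn, csgn. destruct (Nat.even k); auto. rewrite wap_scal, Cmul_m1. reflexivity. Qed.

Definition ZC {A : BanachAlgebra} {X : BanachBimodule A} (m : nat) (Q : list A -> ZT A X) (a1 : A) (rest : list A) : ZT A X :=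
  zadd (zlact a1 (Q rest))
    (zadd (zsum (fun k => zsgn k (Q (mergeAt (k-1) (a1::rest)))) (seq 1 m))
          (zsgn (S m) (zract (Q (removelast (a1::rest))) (last (a1::rest) a1)))).

Lemma zcob_eval {A : BanachAlgebra} {X : BanachBimodule A} m (Q : list A -> ZT A X) a1 rest
  (w : Wmod A X) :
  coboundary m (fun l (w : Wmod A X) => proj1_sig w (Q l)) (a1::rest) w = proj1_sig w (ZC m Q a1 rest).
Proof.
  rewrite cob_cons. unfold ZC. rewrite !wap_add, wap_zsum, wap_zsgn.
  f_equal. f_equal. apply Csum_ext. intros; rewrite wap_zsgn; reflexivity.
Qed.

Lemma split_last {T : Type} : forall (l : list T) n, length l = S n ->
  exists l' b, l = l' ++ [b] /\ length l' = n.
Proof.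
  intros l n H. destruct l as [|a l0] eqn:E; [simpl in H; lia|].
  rewrite <- E in *. assert (Hne : l <> []) by (subst; congruence).
  exists (removelast l), (last l a). split. apply app_removelast_last; auto.
  rewrite length_removelast, H. reflexivity.
Qed.

Lemma abs_bound z K P N N' : Cnorm z <= K * P * N -> 0 <= P -> 0 <= N -> N <= N' ->
  Cnorm z <= Rabs K * P * N'.
Proof.
  intros H HP HN HN'. pose proof (Rle_abs K). pose proof (Rabs_pos K).
  assert (K * P * N <= Rabs K * P * N) by (apply Rmult_le_compat_r; auto; apply Rmult_le_compat_r; auto).
  assert (Rabs K * P * N <= Rabs K * P * N') by (apply Rmult_le_compat_l; auto; apply Rmult_le_pos; auto).
  lra.
Qed.

Section Flat.
Variable A : BanachAlgebra.
Variable X : BanachBimodule A.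
Variable n : nat.
Variable T : Cochain X.
Hypothesis HT : is_BL (S n) T.

Lemma BL_lin_last l a b c x : length l = n ->
  T (l ++ [vadd a (vscal c b)]) x = Cadd (T (l ++ [a]) x) (Cmul c (T (l ++ [b]) x)).
Proof.
  intros Hl. destruct HT as (_ & H2 & _).
  pose proof (H2 (l ++ [a]) (length l) a b c x) as E.
  rewrite !set_nth_last in E. apply E. rewrite length_app; simpl; lia. lia.
Qed.

Lemma BL_zero_last l x : length l = n -> T (l ++ [vzero]) x = C0.
Proof.
  intros Hl. pose proof (BL_lin_last l vzero vzero C1 x Hl) as E.
  rewrite vscal_1, vadd_0 in E.
  set (z := T (l ++ [vzero]) x) in *.
  assert (z = Cadd (Cadd z (Cmul C1 z)) (Copp z)) by ring. rewrite <- E in H. rewrite H. ring.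
Qed.

Lemma RofBound : exists K, 0 <= K /\ forall l, length l = n ->
  boundZ A X (fun b x => T (l ++ [b]) x) (K * prod_norms l).
Proof.
  destruct HT as (_ & _ & K & HK). exists (Rabs K). split. apply Rabs_pos.
  intros l Hl b x. simpl.
  specialize (HK (l ++ [b]) ltac:(rewrite length_app; simpl; lia) x).
  rewrite prod_norms_app in HK.
  pose proof (prod_norms_nonneg l). pose proof (vnorm_nonneg _ b). pose proof (vnorm_nonneg _ x).
  replace (Rabs K * prod_norms l * vnorm b * vnorm x) with (Rabs K * prod_norms l * (vnorm b * vnorm x)) by ring.
  apply (abs_bound _ K _ (vnorm b * vnorm x)); auto. replace (K * prod_norms l * (vnorm b * vnorm x)) with (K * (prod_norms l * vnorm b) * vnorm x) by ring. exact HK.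
  apply Rmult_le_pos; auto. lra.
Qed.

Lemma RofZ l : length l = n -> isZ A X (fun b x => T (l ++ [b]) x).
Proof.
  intros Hl. destruct HT as (H1 & _ & _).
  assert (Hl1 : forall b, length (l ++ [b]) = S n) by (intros; rewrite length_app; simpl; lia).
  split; [|split; [|split; [|split]]].
  - intros b x y. destruct (H1 _ (Hl1 b)) as (L1 & _). apply L1.
  - intros b c x. destruct (H1 _ (Hl1 b)) as (_ & L2 & _). apply L2.
  - intros b1 b2 x. pose proof (BL_lin_last l b1 b2 C1 x Hl) as E. rewrite vscal_1 in E. rewrite E. ring.
  - intros c b x. pose proof (BL_lin_last l vzero b c x Hl) as E. rewrite vadd_0 in E. rewrite E.
    rewrite BL_zero_last by auto. ring.
  - destruct RofBound as (K & HK & HB). exists (K * prod_norms l). split.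
    apply Rmult_le_pos; auto. apply prod_norms_nonneg. apply HB; auto.
Qed.

Definition Rof (l : list A) : ZT A X :=
  match Nat.eq_dec (length l) n with
  | left H => exist _ (fun b x => T (l ++ [b]) x) (RofZ l H)
  | right _ => zzero
  end.

Lemma Rof_fun l : length l = n -> proj1_sig (Rof l) = fun b x => T (l ++ [b]) x.
Proof. intros H. unfold Rof. destruct (Nat.eq_dec (length l) n); [reflexivity | contradiction]. Qed.

Definition Tpp : Cochain (Wmod A X) := fun l (w : Wmod A X) => proj1_sig w (Rof l).

Lemma Tpp_BL : is_BL n Tpp.
Proof.
  split; [|split].
  - intros l Hl. split; [|split].
    + intros; reflexivity.
    + intros; reflexivity.
    + destruct (Zbnd A X (Rof l)) as (K & HK & HB). exists K. intro w.
      pose proof (wnorm_spec A X w _ K HK HB). unfold Tpp. simpl vnorm. rewrite Rmult_comm. exact H.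
  - intros l i a b c w Hl Hi. unfold Tpp.
    assert (E : Rof (set_nth i l (vadd a (vscal c b))) = zadd (Rof (set_nth i l a)) (zscal c (Rof (set_nth i l b)))).
    { apply zeq'; intros b' x. simpl. unfold zaddf, zscalf.
      rewrite !Rof_fun by (rewrite length_set_nth; lia).
      rewrite <- !set_nth_app by lia.
      destruct HT as (_ & H2 & _). apply H2. rewrite length_app; simpl; lia. lia. }
    rewrite E, wap_add, wap_scal. reflexivity.
  - destruct RofBound as (K & HK & HB). exists K. intros l Hl w.
    assert (HB' : boundZ A X (proj1_sig (Rof l)) (K * prod_norms l)) by (rewrite Rof_fun; auto).
    pose proof (wnorm_spec A X w _ _ (Rmult_le_pos _ _ HK (prod_norms_nonneg l)) HB').
    unfold Tpp. simpl vnorm. rewrite Rmult_comm. exact H.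
Qed.

Lemma Tpp_ev l b x : length l = n -> Tpp l (ev b x) = T (l ++ [b]) x.
Proof. intros H. unfold Tpp. simpl. rewrite Rof_fun by auto. reflexivity. Qed.

Hypothesis Hcoc : forall l, length l = S (S n) -> forall x, coboundary (S n) T l x = C0.

Lemma Tpp_cocycle : is_cocycle n Tpp.
Proof.
  split. apply Tpp_BL.
  intros l Hl w. destruct l as [|a1 rest]; [simpl in Hl; lia|].
  unfold Tpp. rewrite zcob_eval.
  assert (E : ZC n Rof a1 rest = zzero).
  { apply zeq'; intros b x. simpl proj1_sig at 2.
    change (proj1_sig (ZC n Rof a1 rest) b x) with (proj1_sig (ev b x) (ZC n Rof a1 rest)).
    rewrite <- zcob_eval. fold Tpp.
    rewrite <- (flatten_cob n T Tpp).
    - apply Hcoc. rewrite length_app. simpl in *. lia.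
    - intros l' b' x' Hl'. rewrite Tpp_ev; auto.
    - intros; reflexivity.
    - auto. }
  rewrite E. apply wap_zero.
Qed.

End Flat.

Definition Stl {A : BanachAlgebra} {X : BanachBimodule A} (S : Cochain (Wmod A X)) : Cochain X :=
  fun l x => S (removelast l) (ev (last l vzero) x).

Lemma Stl_app {A : BanachAlgebra} {X : BanachBimodule A} (S : Cochain (Wmod A X)) l b x :
  Stl S (l ++ [b]) x = S l (ev b x).
Proof. unfold Stl. rewrite removelast_last, last_last. reflexivity. Qed.

Lemma Stl_BL {A : BanachAlgebra} {X : BanachBimodule A} m (S : Cochain (Wmod A X)) :
  is_BL m S -> is_BL (Datatypes.S m) (Stl S).
Proof.
  intros (S1 & S2 & K & HK).
  split; [|split].
  - intros l Hl. destruct (split_last l m Hl) as (l' & b & -> & Hl').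
    destruct (S1 _ Hl') as (L1 & L2 & K' & HK').
    split; [|split].
    + intros x y. rewrite !Stl_app, ev_addx. apply L1.
    + intros c x. rewrite !Stl_app, ev_scalx. apply L2.
    + exists (Rabs K' * vnorm b). intros x. rewrite Stl_app.
      specialize (HK' (ev b x)). simpl vnorm in HK'.
      pose proof (ev_norm A X b x). pose proof (wnorm_nonneg A X (ev b x)).
      pose proof (vnorm_nonneg _ b); pose proof (vnorm_nonneg _ x).
      replace (Rabs K' * vnorm b * vnorm x) with (Rabs K' * 1 * (vnorm b * vnorm x)) by ring.
      apply (abs_bound _ K' 1 (wnorm (ev b x))); auto; try lra.
  - intros l i a b c x Hl Hi. destruct (split_last l m Hl) as (l' & bb & -> & Hl').
    destruct (Nat.eq_dec i m) as [Him|Him].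
    + subst i. rewrite <- Hl', !set_nth_last, !Stl_app, ev_lin.
      destruct (S1 _ Hl') as (L1 & L2 & _).
      assert (L1' : forall w1 w2, S l' (wadd w1 w2) = Cadd (S l' w1) (S l' w2)) by exact L1.
      assert (L2' : forall c w, S l' (wscal c w) = Cmul c (S l' w)) by exact L2.
      rewrite L1', L2'. reflexivity.
    + rewrite !set_nth_app by lia. rewrite !Stl_app. apply S2; auto. lia.
  - exists (Rabs K). intros l Hl x. destruct (split_last l m Hl) as (l' & b & -> & Hl').
    rewrite Stl_app, prod_norms_app.
    specialize (HK l' Hl' (ev b x)). simpl vnorm in HK.
    pose proof (ev_norm A X b x). pose proof (wnorm_nonneg A X (ev b x)).
    pose proof (vnorm_nonneg _ b); pose proof (vnorm_nonneg _ x). pose proof (prod_norms_nonneg l').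
    replace (Rabs K * (prod_norms l' * vnorm b) * vnorm x) with (Rabs K * prod_norms l' * (vnorm b * vnorm x)) by ring.
    apply (abs_bound _ K _ (wnorm (ev b x))); auto.
Qed.

Lemma Stl_flat {A : BanachAlgebra} {X : BanachBimodule A} m (S : Cochain (Wmod A X)) :
  is_BL m S -> forall l b x, length l = Datatypes.S m ->
  coboundary (Datatypes.S m) (Stl S) (l ++ [b]) x = coboundary m S l (ev b x).
Proof.
  intros HS. apply flatten_cob.
  - intros; apply Stl_app.
  - intros l' Hl' w1 w2. destruct HS as (S1 & _). destruct (S1 _ Hl') as (L1 & _). apply L1.
Qed.

Lemma step {A : BanachAlgebra} (m : nat) :
  (forall W : BanachBimodule A, Happ_trivial A W (S m)) ->
  forall X : BanachBimodule A, Happ_trivial A X (S (S m)).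
Proof.
  intros IH X T [HT Hcoc].
  pose proof (Tpp_cocycle A X (S m) T HT Hcoc) as Hc2.
  destruct (IH (Wmod A X) _ Hc2) as (I & U & HU & Hconv).
  set (P := fun i (S0 : Cochain (Wmod A X)) => is_BL m S0 /\
              forall l, length l = S m -> forall w, U i l w = coboundary m S0 l w).
  set (Sf := fun i => epsilon (inhabits (fun (_ : list A) (_ : Wmod A X) => C0)) (P i)).
  assert (HSf : forall i, P i (Sf i)).
  { intros i; apply epsilon_spec. destruct (HU i) as (S0 & H1 & H2). exists S0.
    replace (S m - 1)%nat with m in * by lia. split; auto. }
  exists I, (fun i => coboundary (S m) (Stl (Sf i))). split.
  - intros i. exists (Stl (Sf i)). split.
    + apply Stl_BL. exact (proj1 (HSf i)).
    + intros; reflexivity.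
  - intros l Hl eps He. destruct (split_last l (S m) Hl) as (l' & b & -> & Hl').
    set (eps' := eps / (vnorm b + 1)).
    pose proof (vnorm_nonneg _ b) as Hb.
    assert (He' : 0 < eps') by (unfold eps'; apply Rdiv_lt_0_compat; lra).
    destruct (Hconv l' Hl' eps' He') as [i0 Hi0]. exists i0. intros i Hi x.
    specialize (Hi0 i Hi (ev b x)).
    destruct (HSf i) as [HB HE].
    unfold Fsub, Fadd, Fopp in *.
    rewrite (Stl_flat m (Sf i) HB l' b x Hl').
    rewrite <- (Tpp_ev A X (S m) T HT l' b x Hl').
    rewrite <- (HE l' Hl').
    eapply Rle_trans. exact Hi0. simpl vnorm.
    pose proof (ev_norm A X b x). pose proof (wnorm_nonneg A X (ev b x)). pose proof (vnorm_nonneg _ x).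
    assert (eps' * wnorm (ev b x) <= eps' * (vnorm b * vnorm x)) by (apply Rmult_le_compat_l; lra).
    assert (eps' * vnorm b <= eps).
    { unfold eps'. apply Rmult_le_reg_r with (vnorm b + 1). lra. unfold Rdiv.
      replace (eps * / (vnorm b + 1) * vnorm b * (vnorm b + 1)) with (eps * vnorm b) by (field; lra). nra. }
    nra.
Qed.

Lemma cob0_single {A : BanachAlgebra} {X : BanachBimodule A} (f : Fn X) (T : Cochain X) a x :
  Fsub (coboundary 0 (fun _ => f) [a]) (T [a]) x = Fsub (Fsub (dlact a f) (dract f a)) (T [a]) x.
Proof.
  unfold Fsub, Fadd, Fopp. rewrite cob_cons. simpl. unfold dlact, dract, csgn. simpl. ring.
Qed.

Lemma base {A : BanachAlgebra} : approx_amenable A -> forall X, Happ_trivial A X 1.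
Proof.
  intros HA X T HT. destruct (HA X T HT) as (I & f & Hf & Hc).
  exists I, (fun i => coboundary 0 (fun _ => f i)). split.
  - intros i. exists (fun _ => f i). split; [|intros; reflexivity].
    split; [|split].
    + intros; exact (Hf i).
    + intros; simpl in *; lia.
    + destruct (Hf i) as (_ & _ & K & HK). exists K. intros l Hl x.
      destruct l; [|simpl in Hl; lia]. simpl. rewrite Rmult_1_r. apply HK.
  - intros l Hl eps He. destruct l as [|a [|]]; simpl in Hl; try lia.
    destruct (Hc a eps He) as [i0 Hi0]. exists i0. intros i Hi x.
    rewrite cob0_single. apply Hi0; auto.
Qed.

Lemma conv {A : BanachAlgebra} : (forall X, Happ_trivial A X 1) -> approx_amenable A.
Proof.
  intros H X T HT. destruct (H X T HT) as (I & U & HU & Hc).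
  set (P := fun i (S0 : Cochain X) => is_BL (1 - 1) S0 /\
              forall l, length l = 1%nat -> forall w, U i l w = coboundary (1 - 1) S0 l w).
  set (Sf := fun i => epsilon (inhabits (fun (_ : list A) (_ : X) => C0)) (P i)).
  assert (HSf : forall i, P i (Sf i)) by (intros i; apply epsilon_spec, HU).
  exists I, (fun i => Sf i []). split.
  - intros i. destruct (HSf i) as [(H1 & _) _]. apply H1. reflexivity.
  - intros a eps He. destruct (Hc [a] eq_refl eps He) as [i0 Hi0]. exists i0. intros i Hi x.
    specialize (Hi0 i Hi x). destruct (HSf i) as [_ HE].
    unfold Fsub, Fadd, Fopp in Hi0. rewrite (HE [a] eq_refl x) in Hi0.
    simpl in Hi0.
    replace (Fsub (Fsub (dlact a (Sf i [])) (dract (Sf i []) a)) (T [a]) x)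
      with (Fsub (coboundary 0 (fun _ => Sf i []) [a]) (T [a]) x) by apply cob0_single.
    exact Hi0.
Qed.

Theorem theorem3p9 (A : BanachAlgebra) :
  approx_amenable A <->
  (forall (X : BanachBimodule A) (n : nat), (1 <= n)%nat -> Happ_trivial A X n).
Proof.
  split.
  - intros HA.
    assert (Hall : forall n X, Happ_trivial A X (S n)).
    { induction n. apply base; auto. apply step; auto. }
    intros X n Hn. destruct n; [lia|]. apply Hall.
  - intros H. apply conv. intros X; apply H; lia.
Qed.
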